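(* For every integer $r$, \[\mathcal{H}^r_k = \big(f(D)\,\partial(\overline{L}^\times)\big)^{G_k}\big/\iota(k^\times)\partial(L^\times),\] where $D\in\operatorname{Div}(X_{\overline{k}})$ is any good divisor of degree $r$ (the coset $f(D)\partial(\overline{L}^\times)\subset \overline{M}^\times$ is independent of the choice). In particular $\mathcal{H}^0_k=\partial(\overline{L}^\times)^{G_k}/\iota(k^\times)\partial(L^\times)$.
   Context: Let $p$ be a prime, $k$ a field of characteristic $\neq p$ containing the $p$-th roots of unity, $\overline{k}$ a separable closure, $G_k=\mathrm{Gal}(\overline{k}/k)$. Let $X$ be a smooth projective curve over $k$ with a degree $p$ cyclic cover $X\to\mathbb{P}^1$ over $k$, unramified above $\infty$, given by an affine model $y^p=c\,h(x)$ with $c\in k^\times$ and $h\in k[x]$ monic, $p$-th-power-free, of degree $n$ divisible by $p$; the branch points are the roots of $h$. Let $\Omega\subset X(\overline{k})$ be the set of ramification points, $x(\omega)$ the $x$-coordinate of $\omega$, and $\mathfrak{m}$ the pullback of $\infty$. Write $h=\prod_{i=1}^e h_i^{n_i}$ with distinct monic irreducible $h_i$; let $L=k[x]/(h_1\cdots h_e)\cong K_1\times\dots\times K_e$ ($K_i=k[x]/(h_i)$), and $N:L\to k$ the weighted norm $N(\alpha_1,\dots,\alpha_e)=\prod_i N_{K_i/k}(\alpha_i)^{n_i}$. Let $M=L\times k$, $\partial:L^\times\to M^\times$, $\alpha\mapsto(\alpha^p,N(\alpha))$, and $\iota:k^\times\to M^\times$, $a\mapsto(a,a^{n/p})$. Write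 $\overline{L}=L\otimes_k\overline{k}\cong\mathrm{Map}(\Omega,\overline{k})$, $\overline{M}=M\otimes_k\overline{k}$, with the same maps extended. A divisor on $X_{\overline{k}}$ is good if its support is disjoint from $\Omega$ and from the support of $\mathfrak{m}$. For an affine point $P=(x_0,y_0)\in X(\overline{k})$ not in $\Omega$, set $f(P)=\big((x_0-x(\omega))_{\omega\in\Omega},\,y_0\big)\in \overline{L}^\times\times\overline{k}^\times=\overline{M}^\times$, and for a good divisor $D=\sum n_P[P]$ set $f(D)=\prod_P f(P)^{n_P}$. For $r\in\mathbb{Z}$, \[\mathcal{H}^r_k=\frac{\{(\alpha,s)\in L^\times\times k^\times: c^rN(\alpha)=s^p\}}{\{(\gamma\alpha^p,\gamma^{n/p}N(\alpha)):\alpha\in L^\times,\gamma\in k^\times\}}\subset M^\times/\iota(k^\times)\partial(L^\times).\] *)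

(* Defs.v *)
From HB Require Import structures.
From mathcomp Require Import all_boot all_order all_algebra all_field.
From mathcomp.multinomials Require Import freeg.
Set Implicit Arguments. Unset Strict Implicit. Unset Printing Implicit Defensive.
Import GRing.Theory.
Local Open Scope ring_scope.

Definition is_sep_closure (k kbar : fieldType) (emb : {rmorphism k -> kbar}) :=
  (forall x : kbar, exists q : {poly k},
      [/\ q != 0, separable_poly q & root (map_poly emb q) x]) /\
  (forall q : {poly kbar}, separable_poly q -> (1 < size q)%N ->
      exists x, root q x).

Definition in_Gk (k kbar : fieldType) (emb : {rmorphism k -> kbar})
  (s : {rmorphism kbar -> kbar}) :=
  bijective s /\ forall x : k, s (emb x) = emb x.

Definition pth_power_free (k : fieldType) (p : nat) (h : {poly k}) :=
  forall g : {poly k}, g ^+ p %| h -> (size g <= 1)%N.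

(* Good affine points of X(k̄): (x0,y0) with y0^p = c h(x0), y0 <> 0
   (i.e. not a ramification point, and not above infinity). *)
Definition good_point (kbar : fieldType) (p : nat) (cb : kbar) (hb : {poly kbar})
  (P : kbar * kbar) :=
  (P.2 != 0) && (P.2 ^+ p == cb * hb.[P.1]).

Definition good_div (kbar : fieldType) (p : nat) (cb : kbar) (hb : {poly kbar})
  (D : {freeg (kbar * kbar)}) :=
  all (good_point p cb hb) (dom D).

(* Elements of M̄ = L̄ x k̄ with L̄ = Map(Ω, k̄), where Ω is identified (via the
   x-coordinate) with the set of roots of h in k̄; an element of L̄ is given by
   a function k̄ -> k̄, only its values on the roots matter. *)
Definition Mbar (kbar : fieldType) := ((kbar -> kbar) * kbar)%type.

Definition fdiv (kbar : fieldType) (D : {freeg (kbar * kbar)}) : Mbar kbar :=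
  (fun w => \prod_(P <- dom D) (P.1 - w) ^ coeff P D,
   \prod_(P <- dom D) P.2 ^ coeff P D).

(* weighted norm on L̄: N(beta) = prod over roots (with multiplicity) *)
Definition Nbar (kbar : fieldType) (rts : seq kbar) (b : kbar -> kbar) : kbar :=
  \prod_(a <- rts) b a.

(* image in L̄ of the class of a polynomial a ∈ k[x] in L = k[x]/(h_1...h_e) *)
Definition Lemb (k kbar : fieldType) (emb : {rmorphism k -> kbar}) (a : {poly k})
  : kbar -> kbar := fun w => (map_poly emb a).[w].

Definition unit_Mbar (kbar : fieldType) (rts : seq kbar) (m : Mbar kbar) :=
  (forall w, w \in rts -> m.1 w != 0) /\ m.2 != 0.

Definition in_coset (kbar : fieldType) (p : nat) (rts : seq kbar)
  (fD m : Mbar kbar) :=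
  exists b : kbar -> kbar, [/\ forall w, w \in rts -> b w != 0,
     forall w, w \in rts -> m.1 w = fD.1 w * b w ^+ p
   & m.2 = fD.2 * Nbar rts b].

(* m is fixed by sigma acting on M̄ = Map(Ω,k̄) x k̄
   ((sigma.beta)(w) = sigma(beta(sigma^{-1} w))) *)
Definition fixed_by (kbar : fieldType) (rts : seq kbar)
  (s : {rmorphism kbar -> kbar}) (m : Mbar kbar) :=
  (forall w, w \in rts -> s (m.1 w) = m.1 (s w)) /\ s m.2 = m.2.

(* Main.v *)
Require Import Defs.
From HB Require Import structures.
From mathcomp Require Import all_boot all_order all_algebra all_field.
From mathcomp.multinomials Require Import freeg.
From mathcomp Require Import boolp classical_sets.
From mathcomp Require Import zify ring.
Import GRing.Theory.
Local Open Scope ring_scope.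
Set Implicit Arguments. Unset Strict Implicit. Unset Printing Implicit Defensive.
Lemma min_exists (T : Type) (m : T -> nat) (Q : T -> Prop) :
  (exists x, Q x) -> exists x, Q x /\ forall y, Q y -> (m x <= m y)%N.
Proof.
move=> [x Qx].
have H : forall n, forall x, (m x <= n)%N -> Q x -> exists x, Q x /\ forall y, Q y -> (m x <= m y)%N.
  elim=> [|n IH] z hz Qz.
    exists z; split => // y _; by rewrite (leq_trans hz).
  have [[y [Qy lt]]|N] := pselect (exists y, Q y /\ (m y < m z)%N).
    apply: (IH y) => //; by rewrite -ltnS (leq_trans lt).
  exists z; split=> // y Qy; rewrite leqNgt; apply/negP=> lt; apply: N; by exists y.
exact: (H (m x) x).
Qed.

Section PartI.
Variables (k K : fieldType) (e : {rmorphism k -> K}).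

Definition subring_k (S : K -> Prop) :=
  [/\ forall c, S (e c), forall x y, S x -> S y -> S (x - y)
    & forall x y, S x -> S y -> S (x * y)].

Definition hom_on (S : K -> Prop) (f : K -> K) :=
  [/\ forall c, f (e c) = e c, forall x y, S x -> S y -> f (x - y) = f x - f y
    & forall x y, S x -> S y -> f (x * y) = f x * f y].

Definition PS (S : K -> Prop) (P : {poly K}) := forall i, S P`_i.

Section Sub.
Variables (S : K -> Prop) (f : K -> K) (hS : subring_k S) (hf : hom_on S f).

Lemma S0 : S 0. Proof. case: hS=> h _ _; by rewrite -(rmorph0 e). Qed.
Lemma S1 : S 1. Proof. case: hS=> h _ _; by rewrite -(rmorph1 e). Qed.
Lemma SN x : S x -> S (- x).
Proof. case: hS=> _ h _ Sx; have := h 0 x S0 Sx; by rewrite sub0r. Qed.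
Lemma SD x y : S x -> S y -> S (x + y).
Proof. case: hS=> _ h _ Sx Sy; have := h x (- y) Sx (SN Sy); by rewrite opprK. Qed.
Lemma SB x y : S x -> S y -> S (x - y).
Proof. by case: hS=> _ h _; apply: h. Qed.
Lemma SM x y : S x -> S y -> S (x * y).
Proof. by case: hS=> _ _ h; apply: h. Qed.
Lemma SX x n : S x -> S (x ^+ n).
Proof. move=> Sx; elim: n=> [|n IH]; first by rewrite expr0; exact: S1. rewrite exprS; exact: SM. Qed.
Lemma Ssum (I : Type) (r : seq I) (F : I -> K) :
  (forall i, S (F i)) -> S (\sum_(i <- r) F i).
Proof. move=> h; elim: r=> [|a r IH]; first by rewrite big_nil; exact: S0. rewrite big_cons; exact: SD. Qed.
Lemma Ssum_ord n (F : 'I_n -> K) : (forall i, S (F i)) -> S (\sum_(i < n) F i).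
Proof. move=> h; exact: Ssum. Qed.
Lemma S_horner P x : PS S P -> S x -> S P.[x].
Proof. move=> hP Sx; rewrite horner_coef; apply: Ssum_ord => i; apply: SM=> //; exact: SX. Qed.

Lemma f0 : f 0 = 0. Proof. case: hf=> h _ _; by rewrite -(rmorph0 e) h. Qed.
Lemma f1 : f 1 = 1. Proof. case: hf=> h _ _; by rewrite -(rmorph1 e) h. Qed.
Lemma fN x : S x -> f (- x) = - f x.
Proof. case: hf=> _ h _ Sx; have := h 0 x S0 Sx; by rewrite sub0r f0 sub0r. Qed.
Lemma fD x y : S x -> S y -> f (x + y) = f x + f y.
Proof. case: hf=> _ h _ Sx Sy; have := h x (- y) Sx (SN Sy); rewrite opprK => ->; by rewrite fN // opprK. Qed.
Lemma fB x y : S x -> S y -> f (x - y) = f x - f y.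
Proof. by case: hf=> _ h _; apply: h. Qed.
Lemma fM x y : S x -> S y -> f (x * y) = f x * f y.
Proof. by case: hf=> _ _ h; apply: h. Qed.
Lemma fX x n : S x -> f (x ^+ n) = f x ^+ n.
Proof. move=> Sx; elim: n=> [|n IH]; first by rewrite !expr0 f1. rewrite !exprS fM //; [by rewrite IH | exact: SX]. Qed.
Lemma fsum (I : Type) (r : seq I) (F : I -> K) :
  (forall i, S (F i)) -> f (\sum_(i <- r) F i) = \sum_(i <- r) f (F i).
Proof.
move=> h; elim: r=> [|a r IH]; first by rewrite !big_nil f0.
rewrite !big_cons fD //; [by rewrite IH | exact: Ssum].
Qed.

Lemma PS0 : PS S 0. Proof. move=> i; rewrite coef0; exact: S0. Qed.
Lemma PSC c : S c -> PS S c%:P.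
Proof. move=> Sc i; rewrite coefC; case: eqP=> _ //; exact: S0. Qed.
Lemma PSX : PS S 'X. Proof. move=> i; rewrite coefX; case: eqP=> _; [exact: S1|exact: S0]. Qed.
Lemma PSXn n : PS S 'X^n. Proof. move=> i; rewrite coefXn; case: eqP=> _; [exact: S1|exact: S0]. Qed.
Lemma PSB P Q : PS S P -> PS S Q -> PS S (P - Q).
Proof. move=> hP hQ i; rewrite coefB; exact: SB. Qed.
Lemma PSD P Q : PS S P -> PS S Q -> PS S (P + Q).
Proof. move=> hP hQ i; rewrite coefD; exact: SD. Qed.
Lemma PSM P Q : PS S P -> PS S Q -> PS S (P * Q).
Proof. move=> hP hQ i; rewrite coefM; apply: Ssum_ord=> j; exact: SM. Qed.
Lemma PSZ c P : S c -> PS S P -> PS S (c *: P).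
Proof. move=> Sc hP i; rewrite coefZ; exact: SM. Qed.

Lemma map_coef P i : (map_poly f P)`_i = f P`_i.
Proof. exact: coef_map_id0 f0. Qed.

Lemma mapB P Q : PS S P -> PS S Q -> map_poly f (P - Q) = map_poly f P - map_poly f Q.
Proof. move=> hP hQ; apply/polyP=> i; by rewrite coefB !map_coef coefB fB. Qed.
Lemma mapD P Q : PS S P -> PS S Q -> map_poly f (P + Q) = map_poly f P + map_poly f Q.
Proof. move=> hP hQ; apply/polyP=> i; by rewrite coefD !map_coef coefD fD. Qed.
Lemma mapM P Q : PS S P -> PS S Q -> map_poly f (P * Q) = map_poly f P * map_poly f Q.
Proof.
move=> hP hQ; apply/polyP=> i; rewrite coefM map_coef coefM fsum.
  by apply: eq_bigr=> j _; rewrite !map_coef fM.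
by move=> j; exact: SM.
Qed.
Lemma mapC c : map_poly f c%:P = (f c)%:P.
Proof. apply/polyP=> i; by rewrite map_coef !coefC; case: eqP; rewrite ?f0. Qed.
Lemma mapX : map_poly f 'X = 'X.
Proof. apply/polyP=> i; by rewrite map_coef !coefX; case: eqP; rewrite ?f0 ?f1. Qed.
Lemma mapXn n : map_poly f 'X^n = 'X^n.
Proof. apply/polyP=> i; by rewrite map_coef !coefXn; case: eqP; rewrite ?f0 ?f1. Qed.
Lemma mapZ c P : S c -> PS S P -> map_poly f (c *: P) = f c *: map_poly f P.
Proof. move=> Sc hP; apply/polyP=> i; by rewrite coefZ !map_coef coefZ fM. Qed.
Lemma map_emb (q : {poly k}) : map_poly f (map_poly e q) = map_poly e q.
Proof. apply/polyP=> i; rewrite map_coef coef_map /=; by case: hf => ->. Qed.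
Lemma PS_emb (q : {poly k}) : PS S (map_poly e q).
Proof. move=> i; rewrite coef_map; by case: hS => h _ _; apply: h. Qed.

End Sub.
End PartI.
Section Inv.
Variables (k K : fieldType) (e : {rmorphism k -> K}).
Variable alg : forall x : K, exists q : {poly k}, q != 0 /\ root (map_poly e q) x.

Lemma Sinv (S : K -> Prop) x : subring_k e S -> S x -> S x^-1.
Proof.
move=> hS Sx; have [->|x0] := eqVneq x 0; first by rewrite invr0; exact: S0 hS.
suff H : forall n (a : nat -> k), (exists2 i, (i < n)%N & a i != 0) ->
    \sum_(i < n) e (a i) * x ^+ i = 0 -> S x^-1.
  have [q [q0 rq]] := alg x; apply: (H (size q) (fun i => q`_i)).
    exists (size q).-1; last by rewrite -lead_coefE lead_coef_eq0.
    by rewrite prednK // lt0n size_poly_eq0.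
  move: rq; rewrite /root horner_coef size_map_inj_poly ?rmorph0 //; last exact: fmorph_inj.
  by move=> /eqP hq; rewrite -[X in _ = X]hq; apply: eq_bigr=> i _; rewrite coef_map.
elim=> [|n IH] a [i lti ai] hsum; first by [].
rewrite big_ord_recl /= expr0 mulr1 in hsum.
have [a0|a0] := eqVneq (a 0%N) 0.
  rewrite a0 rmorph0 add0r in hsum; apply: (IH (fun i => a i.+1)).
    case: i lti ai => [|i] lti ai; first by rewrite a0 eqxx in ai.
    by exists i.
  move: hsum; under eq_bigr => j _ do rewrite /bump /= add1n exprS mulrCA.
  by rewrite -mulr_sumr => /eqP; rewrite mulf_eq0 (negbTE x0) /= => /eqP.
have -> : x^-1 = - (e (a 0%N))^-1 * \sum_(i < n) e (a i.+1) * x ^+ i.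
  have ea0 : e (a 0%N) != 0 by rewrite fmorph_eq0.
  apply: (mulfI x0); rewrite mulfV // mulrCA mulr_sumr.
  under eq_bigr => j _ do rewrite mulrCA -exprS.
  have -> : \sum_(i < n) e (a i.+1) * x ^+ i.+1 = - e (a 0%N).
    by apply/eqP; rewrite -addr_eq0 addrC; apply/eqP; rewrite -[X in _ = X]hsum; congr (_ + _); apply: eq_bigr.
  by rewrite mulrN mulNr opprK mulVf.
apply: (SM hS); first by apply: (SN hS); case: hS=> h _ _; rewrite -fmorphV; exact: h.
apply: (Ssum hS) => j; apply: (SM hS); first by case: hS.
exact: (SX hS).
Qed.
End Inv.
Section Ext.
Variables (k K : fieldType) (e : {rmorphism k -> K}).
Hypothesis algsep : forall x : K, exists q : {poly k},
  [/\ q != 0, separable_poly q & root (map_poly e q) x].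

Lemma alg_of x : exists q : {poly k}, q != 0 /\ root (map_poly e q) x.
Proof. by have [q [? _ ?]] := algsep x; exists q. Qed.

Variables (S : K -> Prop) (f : K -> K) (hS : subring_k e S) (hf : hom_on e S f).

Lemma lead_coef_S P : PS S P -> S (lead_coef P).
Proof. by move=> hP; rewrite lead_coefE. Qed.

Variable (a : K).

Definition is_minpoly (mu : {poly K}) := [/\ PS S mu, mu \is monic, root mu a,
   (forall P, PS S P -> root P a -> exists2 Q, PS S Q & P = Q * mu) &
   separable_poly (map_poly f mu)].

Lemma div_mu (mu : {poly K}) : PS S mu -> mu \is monic -> forall P, PS S P ->
  exists Q R, [/\ PS S Q, PS S R, P = Q * mu + R & (size R < size mu)%N].
Proof.
move=> Smu mmu P SP.
have smu : (0 < size mu)%N by rewrite lt0n size_poly_eq0 monic_neq0.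
have lmu : mu`_(size mu).-1 = 1 by move/monicP: mmu; rewrite lead_coefE.
move: {2}(size P) (leqnn (size P)) => n; elim: n P SP => [|n IH] P SP hsz.
  exists 0, P; split=> //; [exact: (PS0 hS)| by rewrite mul0r add0r|].
  by rewrite (leq_ltn_trans hsz).
have [lt|ge] := ltnP (size P) (size mu).
  exists 0, P; split=> //; [exact: (PS0 hS)| by rewrite mul0r add0r].
set d := (size P - size mu)%N; set c := lead_coef P.
set P' := P - c *: ('X^d * mu).
have SP' : PS S P'.
  apply: (PSB hS) => //; apply: (PSZ hS); first exact: lead_coef_S.
  by apply: (PSM hS) => //; exact: (PSXn hS).
have szP' : (size P' <= n)%N.
  have sP0 : (0 < size P)%N by rewrite (leq_trans smu).
  rewrite -ltnS (leq_trans _ hsz) //.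
  have : (size P' <= (size P).-1)%N.
    apply/leq_sizeP => j hj; rewrite /P' coefB coefZ coefXnM.
    have dj : (j < d)%N = false.
      apply/negbTE; rewrite -leqNgt /d; lia.
    rewrite dj; have [->|jn] := eqVneq j (size P).-1.
      have -> : ((size P).-1 - d)%N = (size mu).-1.
        rewrite /d; lia.
      by rewrite lmu mulr1 /c lead_coefE subrr.
    have jP : (size P <= j)%N by move: jn => /eqP; lia.
    rewrite (nth_default 0 jP) (nth_default 0) ?mulr0 ?subrr //.
    move: jP ge; rewrite /d; move: (size P) (size mu) => x y; lia.
  move: sP0; move: (size P') (size P) => x y; lia.
have [Q [R [SQ SR eP' sR]]] := IH P' SP' szP'.
exists (Q + c *: 'X^d), R; split => //.
  apply: (PSD hS) => //; apply: (PSZ hS); [exact: lead_coef_S | exact: (PSXn hS)].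
by rewrite mulrDl addrAC -eP' /P' -scalerAl subrK.
Qed.

Lemma minpoly_exists : exists mu, is_minpoly mu.
Proof.
have [q [q0 sq rq]] := algsep a.
have hq : PS S (map_poly e q) /\ map_poly e q != 0 /\ root (map_poly e q) a.
  by split; [exact: PS_emb | rewrite map_poly_eq0].
have [mu0 [[Smu0 [mu00 rmu0]] minmu0]] := min_exists (fun P : {poly K} => size P)
   (ex_intro (fun P => PS S P /\ P != 0 /\ root P a) _ hq).
set mu := (lead_coef mu0)^-1 *: mu0.
have lc0 : lead_coef mu0 != 0 by rewrite lead_coef_eq0.
have Smu : PS S mu by apply: (PSZ hS) => //; apply: (Sinv (alg_of) hS); exact: lead_coef_S.
have mmu : mu \is monic by apply/monicP; rewrite lead_coefZ mulVf.
have szmu : size mu = size mu0 by rewrite size_scale // invr_eq0.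
have rmu : root mu a by rewrite /root hornerZ (eqP rmu0) mulr0.
have divmu : forall P, PS S P -> root P a -> exists2 Q, PS S Q & P = Q * mu.
  move=> P SP rP; have [Q [R [SQ SR eP sR]]] := div_mu Smu mmu SP.
  exists Q => //; suff R0 : R = 0 by rewrite eP R0 addr0.
  apply/eqP; apply/negPn/negP => R0.
  have : root R a by move: rP; rewrite /root eP hornerD hornerM (eqP rmu) mulr0 add0r.
  move=> rR; have := minmu0 R (conj SR (conj R0 rR)); rewrite -szmu => le.
  by move: (leq_trans sR le); rewrite ltnn.
exists mu; split => //.
have [Q SQ eq] := divmu _ (PS_emb hS q) rq.
have : map_poly f mu %| map_poly e q.
  by rewrite -(map_emb hf q) eq (mapM hS hf) // dvdp_mulIr.
by move/dvdp_separable; apply; rewrite separable_map.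
Qed.


Section Extend.
Variables (mu : {poly K}) (beta : K).
Hypothesis (hmu : is_minpoly mu) (rb : root (map_poly f mu) beta).

Definition S' z := exists P, PS S P /\ z = P.[a].
Definition f' z := match pselect (S' z) with
  | left H => (map_poly f (projT1 (cid H))).[beta] | right _ => z end.

Lemma fwell P1 P2 : PS S P1 -> PS S P2 -> P1.[a] = P2.[a] ->
  (map_poly f P1).[beta] = (map_poly f P2).[beta].
Proof.
move=> S1 S2 eq; case: hmu => Smu _ _ dv _.
have [Q SQ eQ] : exists2 Q, PS S Q & P1 - P2 = Q * mu.
  by apply: dv; [exact: (PSB hS) | rewrite /root hornerD hornerN eq subrr].
apply/eqP; rewrite -subr_eq0 -hornerN -hornerD -(mapB hf) // eQ (mapM hS hf) //.
by rewrite hornerM (eqP rb) mulr0.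
Qed.

Lemma f'E P : PS S P -> f' P.[a] = (map_poly f P).[beta].
Proof.
move=> SP; rewrite /f'; case: pselect => [H|N]; last by exfalso; apply: N; exists P.
by case: (cid H) => Q [SQ eQ] /=; apply: fwell.
Qed.

Lemma extend : [/\ subring_k e S', hom_on e S' f', (forall z, S z -> S' z /\ f' z = f z) & f' a = beta].
Proof.
have SC z : S z -> S' z by move=> Sz; exists z%:P; split; [exact: (PSC hS)| rewrite (hornerC z a)].
split.
- split.
  + move=> c; apply: SC; by case: hS.
  + move=> x y [P [SP ->]] [Q [SQ ->]]; exists (P - Q); split; [exact: (PSB hS)|by rewrite hornerD hornerN].
  + move=> x y [P [SP ->]] [Q [SQ ->]]; exists (P * Q); split; [exact: (PSM hS)|by rewrite hornerM].
- split.
  + move=> c; have Sc : S (e c) by case: hS.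
    have := f'E (PSC hS Sc); rewrite !hornerC (mapC hf) hornerC => ->; by case: hf.
  + move=> x y [P [SP ->]] [Q [SQ ->]]; rewrite -hornerN -hornerD !f'E //; last exact: (PSB hS).
    by rewrite (mapB hf) // hornerD hornerN.
  + move=> x y [P [SP ->]] [Q [SQ ->]]; rewrite -hornerM !f'E //; last exact: (PSM hS).
    by rewrite (mapM hS hf) // hornerM.
- move=> z Sz; split; first exact: SC.
  by have := f'E (PSC hS Sz); rewrite !hornerC (mapC hf) hornerC.
- rewrite -[a]hornerX f'E ?(mapX hf) ?hornerX //; exact: (PSX hS).
Qed.
End Extend.
End Ext.
Lemma monic_root_size (K : fieldType) (mu : {poly K}) a :
  mu \is monic -> root mu a -> (1 < size mu)%N.
Proof.
move=> mmu rmu; rewrite ltnNge; apply/negP=> le.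
have mu0 : mu != 0 by apply: monic_neq0.
have s1 : size mu = 1%N.
  by apply/eqP; rewrite eqn_leq le lt0n size_poly_eq0 mu0.
move: rmu; rewrite (size1_polyC le) /root hornerC.
by move/monicP: mmu; rewrite lead_coefE s1 => -> ; rewrite oner_eq0.
Qed.

Lemma root_list (K : fieldType) (p : {poly K}) : p != 0 ->
  exists rs : seq K, uniq rs /\ forall z, root p z = (z \in rs).
Proof.
move: {2}(size p) (leqnn (size p)) => n; elim: n p => [|n IH] p hs p0.
  by move: hs; rewrite leqn0 size_poly_eq0 (negbTE p0).
have [[a ra]|N] := pselect (exists a, root p a); last first.
  exists [::]; split=> // z; apply/negP=> rz; apply: N; by exists z.
have [q eq] := factor_theorem p a ra.
have q0 : q != 0 by apply: contraNneq p0 => q0; rewrite eq q0 mul0r.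
have hq : (size q <= n)%N.
  move: hs; rewrite eq size_mul ?size_XsubC ?polyXsubC_eq0 // addn2 /=.
  by rewrite ltnS.
have [rs [urs hrs]] := IH q hq q0.
exists (undup (a :: rs)); split; first exact: undup_uniq.
move=> z; rewrite mem_undup in_cons eq rootM root_XsubC -hrs orbC.
by rewrite eq_sym.
Qed.

Section Auto.
Variables (k K : fieldType) (e : {rmorphism k -> K}).
Hypothesis algsep : forall x : K, exists q : {poly k},
  [/\ q != 0, separable_poly q & root (map_poly e q) x].
Hypothesis sepc : forall q : {poly K}, separable_poly q -> (1 < size q)%N ->
  exists x, root q x.

Definition goodt (t : (K -> Prop) * (K -> K)) := subring_k e t.1 /\ hom_on e t.1 t.2.
Definition extt (t u : (K -> Prop) * (K -> K)) :=
  forall z, t.1 z -> u.1 z /\ u.2 z = t.2 z.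

Lemma extt_trans t u v : extt t u -> extt u v -> extt t v.
Proof.
move=> h1 h2 z tz; have [uz e1] := h1 z tz; have [vz e2] := h2 z uz.
by split=> //; rewrite e2.
Qed.

Lemma good_extend t a : goodt t -> exists u, [/\ goodt u, extt t u & u.1 a].
Proof.
case=> hS hf.
have [mu hmu] := minpoly_exists algsep hS hf a.
have [Smu mmu rmu _ smu] := hmu.
have [beta rb] : exists beta, root (map_poly t.2 mu) beta.
  apply: sepc => //; rewrite size_map_poly_id0; first exact: monic_root_size rmu.
  by move/monicP: mmu => ->; rewrite (f1 hf) oner_eq0.
have [h1 h2 h3 h4] := extend hS hf hmu rb.
exists (S' t.1 a, f' t.1 t.2 a beta); split => //.
exists 'X; split; [exact: (PSX hS) | by rewrite hornerX].
Qed.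

Lemma maximal_total t0 : goodt t0 ->
  exists f, hom_on e (fun _ => True) f /\ forall z, t0.1 z -> f z = t0.2 z.
Proof.
move=> g0.
pose T := {t | goodt t /\ extt t0 t}.
pose R := fun x y : T => `[< extt (sval x) (sval y) >].
have e00 : extt t0 t0 by move=> z tz.
pose x0 : T := exist _ t0 (conj g0 e00).
have [|||t tmax] := @ZL_preorder T x0 R.
- by move=> t; apply/asboolP.
- move=> r s t /asboolP h1 /asboolP h2; apply/asboolP; exact: extt_trans h1 h2.
- move=> A totA.
  have [[xa Axa]|NA] := pselect (exists x, A x); last first.
    by exists x0 => s As; exfalso; apply: NA; exists s.
  pose U1 := fun z => exists x, A x /\ (sval x).1 z.
  pose U2 := fun z => match pselect (U1 z) with
    | left H => (sval (projT1 (cid H))).2 z | right _ => z end.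
  have U2E x z : A x -> (sval x).1 z -> U2 z = (sval x).2 z.
    move=> Ax xz; rewrite /U2; case: pselect => [H|N]; last by exfalso; apply: N; exists x.
    case: (cid H) => y [Ay yz] /=.
    case: (totA x y Ax Ay) => /asboolP h; first by have [_ ->] := h z xz.
    by have [_ ->] := h z yz.
  have common x1 x2 z1 z2 : A x1 -> A x2 -> (sval x1).1 z1 -> (sval x2).1 z2 ->
      exists x, [/\ A x, (sval x).1 z1 & (sval x).1 z2].
    move=> A1 A2 h1 h2; case: (totA x1 x2 A1 A2) => /asboolP h.
      by exists x2; split => //; have [] := h z1 h1.
    by exists x1; split => //; have [] := h z2 h2.
  have gxa := (proj1 (svalP xa)).
  have gU : goodt (U1, U2).
    split.
    - split.
      + move=> c; exists xa; split=> //; by case: gxa => -[h _ _].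
      + move=> z1 z2 [x1 [A1 h1]] [x2 [A2 h2]].
        have [x [Ax hx1 hx2]] := common _ _ _ _ A1 A2 h1 h2.
        exists x; split=> //; case: (proj1 (svalP x)) => -[_ h _] _; exact: h.
      + move=> z1 z2 [x1 [A1 h1]] [x2 [A2 h2]].
        have [x [Ax hx1 hx2]] := common _ _ _ _ A1 A2 h1 h2.
        exists x; split=> //; case: (proj1 (svalP x)) => -[_ _ h] _; exact: h.
    - split.
      + move=> c; have xac : (sval xa).1 (e c) by case: gxa => -[h _ _].
        rewrite /= (U2E xa) //; by case: gxa => _ [-> _ _].
      + move=> z1 z2 [x1 [A1 h1]] [x2 [A2 h2]].
        have [x [Ax hx1 hx2]] := common _ _ _ _ A1 A2 h1 h2.
        have [[_ hB _] [_ fB _]] := proj1 (svalP x).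
        by rewrite /= !(U2E x) //; [exact: fB | exact: hB].
      + move=> z1 z2 [x1 [A1 h1]] [x2 [A2 h2]].
        have [x [Ax hx1 hx2]] := common _ _ _ _ A1 A2 h1 h2.
        have [[_ _ hM] [_ _ fM]] := proj1 (svalP x).
        by rewrite /= !(U2E x) //; [exact: fM | exact: hM].
  have eU : extt t0 (U1, U2).
    move=> z tz; have [xz ez] := (proj2 (svalP xa)) z tz.
    split; first by exists xa.
    by rewrite /= (U2E xa).
  exists (exist _ (U1, U2) (conj gU eU)) => s As; apply/asboolP => z sz.
  split; first by exists s. by rewrite /= (U2E s).
have [[hS hf] e0] := svalP t.
have all1 : forall z, (sval t).1 z.
  move=> z; have [u [gu etu uz]] := good_extend z (conj hS hf).
  have tu : R t (exist _ u (conj gu (extt_trans e0 etu))) by apply/asboolP.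
  by have /asboolP /= h := tmax _ tu; have [] := h z uz.
exists (sval t).2; split.
  case: hf => h1 h2 h3; split => // *; [exact: h2 | exact: h3].
by move=> z tz; have [_ ->] := e0 z tz.
Qed.
End Auto.
Section Galois.
Variables (k K : fieldType) (e : {rmorphism k -> K}).
Hypothesis algsep : forall x : K, exists q : {poly k},
  [/\ q != 0, separable_poly q & root (map_poly e q) x].
Hypothesis sepc : forall q : {poly K}, separable_poly q -> (1 < size q)%N ->
  exists x, root q x.

Lemma auto_surj (s : {rmorphism K -> K}) : (forall c, s (e c) = e c) ->
  forall w, exists z, s z = w.
Proof.
move=> se w; have [q [q0 _ rq]] := algsep w.
have p0 : map_poly e q != 0 by rewrite map_poly_eq0.
have [rs [urs hrs]] := root_list p0.
have sub : {subset map s rs <= rs}.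
  move=> z /mapP [y yr ->]; rewrite -hrs.
  have -> : map_poly e q = map_poly s (map_poly e q).
    by rewrite -map_poly_comp; apply: eq_map_poly => c /=; rewrite se.
  by rewrite /root horner_map; move: (hrs y); rewrite yr /root => /eqP ->; rewrite rmorph0.
have szs : (size rs <= size (map s rs))%N by rewrite size_map.
have [_ eqs] := uniq_min_size (etrans (map_inj_uniq (fmorph_inj s) rs) urs) sub szs.
have : w \in map s rs by rewrite eqs -hrs.
by case/mapP => z _ ->; exists z.
Qed.

Lemma galois_fixed x : (forall s : {rmorphism K -> K}, in_Gk e s -> s x = x) ->
  exists c, x = e c.
Proof.
move=> hx; have [//|nx] := pselect (exists c, x = e c); exfalso.
pose t0 := ((fun z => exists c, z = e c), (fun z : K => z)).
have g0 : goodt e t0.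
  split; split => //=.
  - by move=> c; exists c.
  - by move=> _ _ [c1 ->] [c2 ->]; exists (c1 - c2); rewrite rmorphB.
  - by move=> _ _ [c1 ->] [c2 ->]; exists (c1 * c2); rewrite rmorphM.
have [hS hf] := g0.
have [mu hmu] := minpoly_exists algsep hS hf x.
have [Smu mmu rmu _ smu] := hmu.
have mapid : map_poly t0.2 mu = mu by apply: map_poly_id.
rewrite mapid in smu.
have [q emu] := factor_theorem mu x rmu.
have q0 : q != 0 by apply: contraNneq (monic_neq0 mmu) => q0; rewrite emu q0 mul0r.
have sq : (1 < size q)%N.
  rewrite ltnNge; apply/negP => le.
  have lq : lead_coef q = 1.
    by move/monicP: mmu; rewrite emu lead_coefM lead_coefXsubC mulr1.
  have s1 : size q = 1%N by apply/eqP; rewrite eqn_leq le lt0n size_poly_eq0 q0.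
  have eq1 : q = 1 by rewrite (size1_polyC le); move: lq; rewrite lead_coefE s1 => ->.
  have := Smu 0%N; rewrite emu eq1 mul1r coefB coefX coefC /= sub0r.
  by case => c hc; apply: nx; exists (- c); rewrite rmorphN -hc opprK.
move: smu; rewrite emu separable_root => /andP [sepq nrq].
have [y ry] := sepc sepq sq.
have yx : y != x by apply: contraNneq nrq => <-.
have rb : root (map_poly t0.2 mu) y by rewrite mapid emu rootM ry.
have [h1 h2 h3 h4] := extend hS hf hmu rb.
have [f [[fe fB fM] hf0]] := maximal_total algsep sepc (t0 := (S' t0.1 x, f' t0.1 t0.2 x y)) (conj h1 h2).
have fx : f x = y.
  rewrite hf0 ?h4 //; exists 'X; split; [exact: (PSX hS) | by rewrite hornerX].
have fB' : forall a b, f (a - b) = f a - f b by move=> a b; exact: fB.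
have fM' : forall a b, f (a * b) = f a * f b by move=> a b; exact: fM.
have f1 : f 1 = 1 by rewrite -(rmorph1 e) fe.
pose s : {rmorphism K -> K} := HB.pack_for {rmorphism K -> K} f
  (GRing.isZmodMorphism.Build K K f fB') (GRing.isMonoidMorphism.Build K K f (conj f1 fM')).
have inG : in_Gk e s.
  split; last exact: fe.
  have surj := auto_surj (s := s) fe.
  pose g w := sval (cid (surj w)).
  exists g => z; last exact: (svalP (cid (surj z))).
  apply: (fmorph_inj s); exact: (svalP (cid (surj (s z)))).
by move/eqP: yx; apply; rewrite -fx; exact: (hx s inG).
Qed.
End Galois.
Lemma interp (K : fieldType) (u : seq K) (g : K -> K) : uniq u ->
  exists A : {poly K}, (size A <= size u)%N /\ forall w, w \in u -> A.[w] = g w.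
Proof.
elim: u => [|w0 u IH] /=; first by move=> _; exists 0; split; rewrite ?size_poly0.
case/andP => nw0 uu; have [A [sA hA]] := IH uu.
pose Z := \prod_(v <- u) ('X - v%:P).
have Zw0 : Z.[w0] != 0.
  by rewrite -/(root Z w0) root_prod_XsubC.
exists (A + ((g w0 - A.[w0]) / Z.[w0]) *: Z); split.
  apply: (leq_trans (size_polyD _ _)); rewrite geq_max (leq_trans sA) //=.
  by rewrite (leq_trans (size_scale_leq _ _)) // size_prod_XsubC.
move=> w; rewrite in_cons => /orP [/eqP ->|wu].
  by rewrite hornerD hornerZ divfK // addrC subrK.
have : root Z w by rewrite root_prod_XsubC.
by rewrite hornerD hornerZ /root => /eqP ->; rewrite mulr0 addr0 hA.
Qed.

Lemma interp_uniq (K : fieldType) (u : seq K) (A B : {poly K}) : uniq u ->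
  (size A <= size u)%N -> (size B <= size u)%N ->
  (forall w, w \in u -> A.[w] = B.[w]) -> A = B.
Proof.
move=> uu sA sB hAB; apply/eqP; rewrite -subr_eq0; apply/negPn/negP => nz.
have := max_poly_roots nz _ uu.
have -> : all (root (A - B)) u.
  by apply/allP => w wu; rewrite /root hornerD hornerN hAB // subrr.
move=> /(_ isT); rewrite ltnNge (leq_trans (size_polyD _ _)) //.
by rewrite size_polyN geq_max sA sB.
Qed.

Section FunDescent.
Variables (k K : fieldType) (e : {rmorphism k -> K}).
Hypothesis algsep : forall x : K, exists q : {poly k},
  [/\ q != 0, separable_poly q & root (map_poly e q) x].
Hypothesis sepc : forall q : {poly K}, separable_poly q -> (1 < size q)%N ->
  exists x, root q x.

Lemma Gk_map_emb (s : {rmorphism K -> K}) (q : {poly k}) : in_Gk e s ->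
  map_poly s (map_poly e q) = map_poly e q.
Proof. by case=> _ se; rewrite -map_poly_comp; apply: eq_map_poly => c /=; rewrite se. Qed.

Lemma Gk_horner (s : {rmorphism K -> K}) (q : {poly k}) w : in_Gk e s ->
  s (map_poly e q).[w] = (map_poly e q).[s w].
Proof. by move=> hs; rewrite -horner_map Gk_map_emb. Qed.

Lemma fun_descent (rts : seq K) (g : K -> K) :
  (forall s, in_Gk e s -> forall w, w \in rts -> s w \in rts) ->
  (forall s, in_Gk e s -> forall w, w \in rts -> s (g w) = g (s w)) ->
  exists a : {poly k}, forall w, w \in rts -> (map_poly e a).[w] = g w.
Proof.
move=> stab comm; set u := undup rts; have uu : uniq u := undup_uniq rts.
have [A [sA hA]] := interp g uu.
have fixA : forall s, in_Gk e s -> map_poly s A = A.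
  move=> s hs; apply: (interp_uniq uu) => //.
    by rewrite size_map_inj_poly //; [exact: fmorph_inj | rewrite rmorph0].
  move=> w wu.
  have sub : {subset map s u <= u}.
    by move=> z /mapP [y yu ->]; rewrite mem_undup stab // -mem_undup.
  have szs : (size u <= size (map s u))%N by rewrite size_map.
  have [_ eqs] := uniq_min_size (etrans (map_inj_uniq (fmorph_inj s) u) uu) sub szs.
  have : w \in map s u by rewrite eqs.
  case/mapP => y yu ->; rewrite horner_map hA // hA; last by rewrite -eqs map_f.
  by apply: comm => //; move: yu; rewrite mem_undup.
have hc : forall i, exists c, A`_i = e c.
  move=> i; apply: (galois_fixed algsep sepc) => s hs.
  by rewrite -{2}(fixA s hs) coef_map.
pose a := \poly_(i < size A) sval (cid (hc i)).
exists a => w wr.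
have -> : map_poly e a = A.
  apply/polyP => i; rewrite coef_map coef_poly /=.
  case: ltnP => hi; first by rewrite -(svalP (cid (hc i))).
  by rewrite rmorph0 nth_default.
by rewrite hA // mem_undup.
Qed.
End FunDescent.
Lemma prod_count (K : fieldType) (rts : seq K) w :
  ('X - w%:P) ^+ count_mem w rts %| \prod_(a <- rts) ('X - a%:P).
Proof.
rewrite (bigID (fun a => a == w)) /=; apply: dvdp_mulr.
rewrite (eq_bigr (fun _ => 'X - w%:P)); last by move=> a /eqP ->.
rewrite big_const_seq iter_mulr_1.
by rewrite (eq_count (a2 := pred1 w)) // => a; rewrite /= eq_sym.
Qed.

Section Mult.
Variables (k K : fieldType) (e : {rmorphism k -> K}).
Hypothesis algsep : forall x : K, exists q : {poly k},
  [/\ q != 0, separable_poly q & root (map_poly e q) x].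

Lemma mult_lt (p : nat) (h : {poly k}) (rts : seq K) :
  pth_power_free p h -> map_poly e h = \prod_(a <- rts) ('X - a%:P) ->
  forall w, w \in rts -> (count_mem w rts < p)%N.
Proof.
move=> ppf eh w wr; rewrite ltnNge; apply/negP => cp.
have [q [q0 sq rq]] := algsep w.
have [g [[g0 rg] ming]] := min_exists (fun P : {poly k} => size P)
   (ex_intro (fun P => P != 0 /\ root (map_poly e P) w) q (conj q0 rq)).
have gdiv : forall P : {poly k}, root (map_poly e P) w -> g %| P.
  move=> P rP; apply/modp_eq0P; apply/eqP; apply/negPn/negP => r0.
  have rr : root (map_poly e (P %% g)) w.
    move: rP; rewrite map_modp /root {1}(divp_eq (map_poly e P) (map_poly e g)).
    by rewrite hornerD hornerM (eqP rg) mulr0 add0r.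
  have := ming _ (conj r0 rr); rewrite leqNgt ltn_modp g0 //.
have gs : separable_poly g by apply: dvdp_separable sq; exact: gdiv.
have [G' eG] := factor_theorem _ _ rg.
have nG' : ~~ root G' w.
  by move: gs; rewrite -(separable_map e) eG separable_root => /andP [].
have cG : coprimep ('X - w%:P) G' by rewrite coprimep_sym coprimep_XsubC.
have claim : forall j (H : {poly k}), ('X - w%:P) ^+ j %| map_poly e H -> g ^+ j %| H.
  elim => [|j IH] H; first by move=> _; rewrite expr0 dvd1p.
  move=> hd.
  have rH : root (map_poly e H) w.
    by rewrite -dvdp_XsubCl (dvdp_trans _ hd) // exprS dvdp_mulr.
  have gH := gdiv _ rH; rewrite -(divpK gH) in hd *.
  rewrite exprSr dvdp_mul // IH //.
  move: hd; rewrite rmorphM /= eG mulrA exprSr dvdp_mul2r ?polyXsubC_eq0 //.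
  by rewrite Gauss_dvdpl // coprimep_expl // coprimep_sym.
have : g ^+ p %| h.
  apply: claim; rewrite eh (dvdp_trans _ (prod_count rts w)) //.
  exact: dvdp_exp2l.
move/ppf => sg.
have g00 : g`_0 != 0 by move: g0; rewrite {1}(size1_polyC sg) polyC_eq0.
by move: rg; rewrite (size1_polyC sg) map_polyC /root hornerC fmorph_eq0 (negbTE g00).
Qed.
End Mult.
Section Nbar.
Variables (K : fieldType) (rts : seq K).
Lemma NbarM (b1 b2 : K -> K) : Nbar rts (fun w => b1 w * b2 w) = Nbar rts b1 * Nbar rts b2.
Proof. by rewrite /Nbar big_split. Qed.
Lemma Nbar_eq (b1 b2 : K -> K) : (forall w, w \in rts -> b1 w = b2 w) -> Nbar rts b1 = Nbar rts b2.
Proof. by move=> h; apply: eq_big_seq. Qed.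
Lemma NbarX (b : K -> K) n : Nbar rts (fun w => b w ^+ n) = Nbar rts b ^+ n.
Proof. by rewrite /Nbar prodrXl. Qed.
Lemma Nbar_neq0 (b : K -> K) : (forall w, w \in rts -> b w != 0) -> Nbar rts b != 0.
Proof. move=> h; rewrite /Nbar prodf_seq_neq0; apply/allP => w wr /=; exact: h. Qed.
Lemma Nbar_const c : Nbar rts (fun _ => c) = c ^+ size rts.
Proof. by rewrite /Nbar big_const_seq iter_mulr_1 count_predT. Qed.
End Nbar.

Lemma prod_exprz (K : fieldType) (I : Type) (r : seq I) (F : I -> K) (c : int) :
  (\prod_(i <- r) F i) ^ c = \prod_(i <- r) F i ^ c.
Proof.
elim: r => [|a r IH]; first by rewrite !big_nil exp1rz.
by rewrite !big_cons expfzMl IH.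
Qed.

Lemma prod_exprz_sum (K : fieldType) (I : Type) (r : seq I) (F : I -> int) (x : K) :
  x != 0 -> \prod_(i <- r) x ^ F i = x ^ (\sum_(i <- r) F i).
Proof.
move=> x0; elim: r => [|a r IH]; first by rewrite !big_nil expr0z.
by rewrite !big_cons IH expfzDr.
Qed.

Lemma degE (K : choiceType) (D : {freeg K / int}) : deg D = \sum_(z <- dom D) coeff z D.
Proof.
rewrite -{1}(freeg_sumE D) raddf_sum; apply: eq_bigr => z _; exact: degU.
Qed.

Section Coset.
Variables (K : fieldType) (p : nat) (cb : K) (rts : seq K) (zeta : K).
Hypotheses (pp : prime p) (pz : p.-primitive_root zeta) (cb0 : cb != 0).
Hypothesis proot : forall a : K, a != 0 -> exists b, b ^+ p = a.
Hypothesis mult : forall w, w \in rts -> (count_mem w rts < p)%N.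
Hypothesis rts0 : rts != [::].
Let hb := \prod_(a <- rts) ('X - a%:P).

Lemma fD_facts (D : {freeg (K * K)}) r : good_div p cb hb D -> deg D = r ->
  [/\ forall w, w \in rts -> (fdiv D).1 w != 0, (fdiv D).2 != 0
    & (fdiv D).2 ^+ p = cb ^ r * Nbar rts (fdiv D).1].
Proof.
move=> /allP gD dD.
have gP : forall P, P \in dom D -> [/\ P.2 != 0, P.2 ^+ p = cb * hb.[P.1] & hb.[P.1] != 0].
  move=> P PD; have /andP [P20 /eqP P2p] := gD P PD; split => //.
  by apply: contraNneq P20 => h0; move: P2p; rewrite h0 mulr0 => /eqP; rewrite expf_eq0 => /andP [].
have hbE x : hb.[x] = \prod_(a <- rts) (x - a).
  by rewrite /hb horner_prod; apply: eq_bigr => a _; rewrite hornerXsubC.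
split.
- move=> w wr; rewrite /fdiv /= big_seq prodf_seq_neq0; apply/allP => P _; apply/implyP => PD.
  rewrite expfz_eq0 negb_and; apply/orP; right.
  have [_ _ hP] := gP P PD; rewrite subr_eq0; apply: contraNneq hP => ->.
  by rewrite -/(root hb w) root_prod_XsubC.
- rewrite /fdiv /= big_seq prodf_seq_neq0; apply/allP => P _; apply/implyP => PD.
  by have [h _ _] := gP P PD; rewrite expfz_eq0 negb_and h orbT.
rewrite /fdiv /= -prodrXl.
rewrite big_seq (eq_bigr (fun P => cb ^ coeff P D * hb.[P.1] ^ coeff P D)); last first.
  move=> P PD; have [_ e2 _] := gP P PD.
  rewrite -expfzMl -e2; change ((P.2 ^ coeff P D) ^ (p%:Z) = (P.2 ^ (p%:Z)) ^ coeff P D).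
  exact: exprzAC.
rewrite -big_seq big_split /= prod_exprz_sum // -degE dD; congr (_ * _).
rewrite /Nbar (eq_bigr (fun P => \prod_(a <- rts) (P.1 - a) ^ coeff P D)); last first.
  by move=> P _; rewrite hbE prod_exprz.
by rewrite exchange_big.
Qed.

Lemma coset_char (D : {freeg (K * K)}) r : good_div p cb hb D -> deg D = r ->
  forall m : Mbar K, in_coset p rts (fdiv D) m <->
    unit_Mbar rts m /\ cb ^ r * Nbar rts m.1 = m.2 ^+ p.
Proof.
move=> gD dD m; have [f1 f2 f3] := fD_facts gD dD.
split.
  case=> b [b0 e1 e2]; split; first split.
  - by move=> w wr; rewrite e1 // mulf_neq0 ?f1 //; apply: expf_neq0; exact: b0.
  - by rewrite e2 mulf_neq0 // Nbar_neq0.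
  rewrite (Nbar_eq (b2 := fun w => (fdiv D).1 w * b w ^+ p)) // NbarM NbarX.
  by rewrite e2 exprMn f3 mulrA.
case=> -[m1 m2] eqn.
have hr : forall a : K, exists b, a != 0 -> b ^+ p = a.
  move=> a; have [a0|a0] := eqVneq a 0; first by exists 0.
  by have [b hb'] := proot a0; exists b.
pose rt a := sval (cid (hr a)).
have rtE a : a != 0 -> rt a ^+ p = a by move=> a0; exact: (svalP (cid (hr a)) a0).
have p0 : (0 < p)%N by exact: prime_gt0.
pose b0 w := rt (m.1 w / (fdiv D).1 w).
have b0p w : w \in rts -> b0 w ^+ p = m.1 w / (fdiv D).1 w.
  move=> wr; rewrite rtE //; apply: mulf_neq0; [exact: m1 | by rewrite invr_eq0 f1].
have b00 w : w \in rts -> b0 w != 0.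
  move=> wr; apply/eqP => h; have := b0p w wr; rewrite h expr0n (gtn_eqF p0) /=.
  by move/esym/eqP; rewrite mulf_eq0 invr_eq0 (negbTE (m1 w wr)) (negbTE (f1 w wr)).
have N0 : (fdiv D).2 * Nbar rts b0 != 0 by rewrite mulf_neq0 // Nbar_neq0.
set rho := m.2 / ((fdiv D).2 * Nbar rts b0).
have rhop : rho ^+ p = 1.
  have key : Nbar rts m.1 = Nbar rts (fdiv D).1 * Nbar rts (fun w => b0 w ^+ p).
    rewrite -NbarM; apply: Nbar_eq => w wr; rewrite b0p // mulrCA divff ?mulr1 //; exact: f1.
  rewrite /rho exprMn exprVn -eqn exprMn f3 key NbarX mulrA divff //.
  by rewrite -f3 -exprMn; apply: expf_neq0.
have [w0 w0r] : exists w0, w0 \in rts.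
  by move: rts0; case: (rts) => [|a l] // _; exists a; rewrite mem_head.
set c0 := count_mem w0 rts.
have c0p : coprime c0 p.
  rewrite coprime_sym prime_coprime // gtnNdvd //; last exact: (mult w0r).
  by rewrite /c0 -has_count; apply/hasP; exists w0 => //=.
have pz' : p.-primitive_root (zeta ^+ c0) by rewrite prim_root_exp_coprime.
have [i ei] := prim_rootP pz' rhop.
pose delta w := if w == w0 then zeta ^+ i else 1.
have Nd : Nbar rts delta = rho.
  rewrite ei /Nbar /delta -big_mkcond /=.
  rewrite big_const_seq iter_mulr_1 -exprM mulnC exprM.
  by rewrite (eq_count (a2 := pred1 w0)) // => a; rewrite /= eq_sym.
exists (fun w => b0 w * delta w); split.
- move=> w wr; apply: mulf_neq0; first exact: b00.
  rewrite /delta; case: ifP => _; last exact: oner_neq0.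
  apply: expf_neq0; apply/eqP => z0; have := prim_expr_order pz.
  by rewrite z0 expr0n (gtn_eqF p0) => /eqP; rewrite eq_sym oner_eq0.
- move=> w wr; rewrite exprMn b0p // /delta.
  have -> : (if w == w0 then zeta ^+ i else 1) ^+ p = 1.
    case: ifP => _; last by rewrite expr1n.
    by rewrite -exprM mulnC exprM (prim_expr_order pz) expr1n.
  by rewrite mulr1 mulrCA divff ?mulr1 //; exact: f1.
rewrite NbarM Nd /rho mulrA mulrCA divff ?mulr1 //.
Qed.
End Coset.
Lemma proot_exists (K : fieldType) (p : nat) :
  (forall q : {poly K}, separable_poly q -> (1 < size q)%N -> exists x, root q x) ->
  prime p -> p%:R != 0 :> K -> forall a : K, a != 0 -> exists b, b ^+ p = a.
Proof.
move=> sepc pp pK a a0.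
have p0 : (0 < p)%N by exact: prime_gt0.
set Q := 'X^p - a%:P.
have sQ : separable_poly Q.
  rewrite unlock; apply/Bezout_coprimepP.
  set c := (p%:R * a)^-1.
  exists ((- (c * p%:R))%:P, c%:P * 'X).
  have -> : Q^`() = (p%:R)%:P * 'X^(p.-1).
    by rewrite /Q derivB derivXn derivC subr0 polyC_natr mulr_natl.
  have -> : Q = 'X * 'X^(p.-1) - a%:P by rewrite /Q -exprS prednK.
  have -> : (- (c * p%:R))%:P * ('X * 'X^(p.-1) - a%:P) + c%:P * 'X * ((p%:R)%:P * 'X^(p.-1))
      = (c * p%:R * a)%:P.
    rewrite !polyCM polyCN; ring.
  by rewrite /c -mulrA mulVf ?mulf_neq0 // polyC1 eqpxx.
have szQ : (1 < size Q)%N by rewrite size_XnsubC.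
have [b rb] := sepc Q sQ szQ.
by exists b; move: rb; rewrite /root /Q hornerD hornerN hornerXn hornerC subr_eq0 => /eqP.
Qed.

Lemma coprime_prod (K : fieldType) (P : {poly K}) (rts : seq K) :
  (forall w, w \in rts -> ~~ root P w) -> coprimep P (\prod_(a <- rts) ('X - a%:P)).
Proof.
elim: rts => [|a r IH] h; first by rewrite big_nil coprimep1.
rewrite big_cons coprimepMr coprimep_XsubC h ?mem_head //=.
by apply: IH => w wr; apply: h; rewrite in_cons wr orbT.
Qed.
Unset Implicit Arguments.

Theorem lemma4p3 (p : nat) (k kbar : fieldType) (emb : {rmorphism k -> kbar})
  (c : k) (h : {poly k}) (rts : seq kbar) (r : int) :
  prime p -> ~~ (p \in [pchar k]) ->
  (exists z : k, p.-primitive_root z) ->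
  is_sep_closure emb ->
  c != 0 -> h \is monic -> pth_power_free p h ->
  (0 < (size h).-1)%N -> (p %| (size h).-1)%N ->
  map_poly emb h = \prod_(a <- rts) ('X - a%:P) ->
  let n := (size h).-1 in
  let cb := emb c in
  let hb := map_poly emb h in
  (forall D D' : {freeg (kbar * kbar)},
     good_div p cb hb D -> good_div p cb hb D' -> deg D = r -> deg D' = r ->
     forall m : Mbar kbar, in_coset p rts (fdiv D) m <-> in_coset p rts (fdiv D') m)
  /\
  (forall D : {freeg (kbar * kbar)}, good_div p cb hb D -> deg D = r ->
   forall m : Mbar kbar, unit_Mbar rts m ->
     ((forall s : {rmorphism kbar -> kbar}, in_Gk emb s -> fixed_by rts s m)
      /\ in_coset p rts (fdiv D) m)
     <->
     (exists (a : {poly k}) (s : k) (g : k) (al : {poly k}),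
        [/\ coprimep a h, s != 0, g != 0 & coprimep al h] /\
        [/\ cb ^ r * Nbar rts (Lemb emb a) = emb s ^+ p,
            forall w, w \in rts ->
              m.1 w = Lemb emb a w * emb g * Lemb emb al w ^+ p
          & m.2 = emb s * emb g ^+ (n %/ p) * Nbar rts (Lemb emb al)])).
Proof.
move=> pp npc [z pz] [algsep sepc] c0 mh ppf n0 pn ehr n cb hb.
have pK : p%:R != 0 :> kbar.
  rewrite -(rmorph_nat emb) fmorph_eq0; apply: contra npc => hp.
  by apply/andP; split.
have proot := proot_exists sepc pp pK.
have pz' : p.-primitive_root (emb z) by rewrite fmorph_primitive_root.
have cb0 : cb != 0 by rewrite fmorph_eq0.
have mult := mult_lt algsep ppf ehr.
have szr : size rts = n.
  have := size_prod_XsubC rts (fun a => a); rewrite -ehr.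
  rewrite size_map_inj_poly ?rmorph0 //; last exact: fmorph_inj.
  by rewrite /n => ->.
have rts0 : rts != [::] by apply/eqP => r0; move: n0; rewrite -/n -szr r0.
have CC := coset_char pp pz' cb0 proot mult rts0.
have stab : forall s, in_Gk emb s -> forall w, w \in rts -> s w \in rts.
  move=> s hs w wr; rewrite -root_prod_XsubC -ehr /root -Gk_horner //.
  by move: wr; rewrite -root_prod_XsubC -ehr => /eqP ->; rewrite rmorph0.
have permr : forall s, in_Gk emb s -> perm_eq (map s rts) rts.
  move=> s hs; apply: prod_XsubC_eq.
  by rewrite big_map -map_prod_XsubC -ehr Gk_map_emb.
split.
  move=> D D' gD gD' dD dD' m; rewrite /hb ehr in gD gD'.
  rewrite (CC D r gD dD m) (CC D' r gD' dD' m); done.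
move=> D gD dD m um; rewrite /hb ehr in gD; rewrite (CC D r gD dD m).
have Lemb1 w : Lemb emb 1 w = 1 by rewrite /Lemb rmorph1 hornerC.
split.
  case=> fixm [_ normeq].
  have [s0 es0] := galois_fixed algsep sepc (fun s hs => proj2 (fixm s hs)).
  have [a ha] := fun_descent algsep sepc stab (fun s hs w wr => (proj1 (fixm s hs)) w wr).
  have [m1 m2] := um.
  exists a, s0, 1, 1; split; split.
  - rewrite -(coprimep_map emb) ehr; apply: coprime_prod => w wr.
    by rewrite /root ha // m1.
  - by move: m2; rewrite es0 fmorph_eq0.
  - exact: oner_neq0.
  - exact: coprime1p.
  - by rewrite (Nbar_eq (b2 := m.1)) // normeq es0.
  - by move=> w wr; rewrite Lemb1 expr1n mulr1 rmorph1 mulr1 /Lemb ha.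
  - by rewrite rmorph1 expr1n mulr1 (Nbar_eq (b2 := fun _ => 1)) // Nbar_const expr1n mulr1.
case=> a [s [g [al [[ca s0 g0 cal] [eqn e1 e2]]]]].
split; last first.
  split => //.
  rewrite (Nbar_eq (b2 := fun w => (Lemb emb a w * emb g) * Lemb emb al w ^+ p)) //.
  rewrite !NbarM NbarX Nbar_const szr e2 !exprMn -exprM divnK //.
  by rewrite !mulrA eqn.
move=> sg hs; split.
  move=> w wr; rewrite !e1 ?stab // !rmorphM rmorphXn /Lemb !Gk_horner //.
  by case: hs => _ ->.
rewrite e2 !rmorphM rmorphXn; case: (hs) => _ se; rewrite !se; congr (_ * _).
rewrite /Nbar rmorph_prod; under eq_bigr => w _ do rewrite /Lemb Gk_horner //.
by rewrite -(big_map sg xpredT (fun w => (map_poly emb al).[w])) (perm_big _ (permr sg hs)).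
Qed.
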